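(* Under the hypotheses of Proposition 3 (two-system setup with a steady-state map $x_2^s$ defined on all of $\mathbb{R}^{n_1}$; $f_1,f_2$ globally Lipschitz; symmetric positive definite $P_1,Q_1,P_2,Q_2$ with $P_1\nabla_{x_1}f_1^r(x_1)+\nabla_{x_1}f_1^r(x_1)^TP_1\preceq -Q_1$ and $P_2\nabla_{x_2}f_2(x_1,x_2)+\nabla_{x_2}f_2(x_1,x_2)^TP_2\preceq -Q_2$ for all $x_1,x_2$), for $\theta>0$ define $$V(x_1,x_2)=\|f_1^r(x_1)\|_{P_1}^2+\theta\,\|f_2(x_1,x_2)\|_{P_2}^2 .$$ Then there exists $\nu>0$, independent of $\theta$, such that for every $\theta>0$ and all $(x_1,x_2)$, the derivative of $V$ along the predictive-sensitivity vector field satisfies $$\dot V(x_1,x_2)\le -\begin{bmatrix}\|f_2(x_1,x_2)\|_{P_2}\\ \|f_1^r(x_1)\|_{P_1}\end{bmatrix}^T\begin{bmatrix}\frac{\theta\lambda_{\min}(Q_2)}{\|P_2\|_2} & -\nu\\ -\nu & \frac{\lambda_{\min}(Q_1)}{\|P_1\|_2}\end{bmatrix}\begin{bmatrix}\|f_2(x_1,x_2)\|_{P_2}\\ \|f_1^r(x_1)\|_{P_1}\end{bmatrix}.$$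
   Context: Two-system setup: Let $f_1:\mathbb{R}^{n_1}\times\mathbb{R}^{n_2}\to\mathbb{R}^{n_1}$ and $f_2:\mathbb{R}^{n_1}\times\mathbb{R}^{n_2}\to\mathbb{R}^{n_2}$ be continuously differentiable, and assume $\nabla_{x_2}f_2(x_1,x_2)$ is invertible for all $(x_1,x_2)$. Define the extended sensitivity $S_{x_1}^{x_2}(x_1,x_2):=-\nabla_{x_2}f_2(x_1,x_2)^{-1}\nabla_{x_1}f_2(x_1,x_2)\in\mathbb{R}^{n_2\times n_1}$. The predictive-sensitivity system is $\dot x_1=f_1(x_1,x_2)$, $\dot x_2=f_2(x_1,x_2)+S_{x_1}^{x_2}(x_1,x_2)f_1(x_1,x_2)$; it is assumed that this right-hand side is locally Lipschitz continuous. A steady-state map is a continuously differentiable map $x_2^s$ with $f_2(x_1,x_2^s(x_1))=0$. The reduced vector field is $f_1^r(x_1):=f_1(x_1,x_2^s(x_1))$, with Jacobian $\nabla_{x_1}f_1^r(x_1)=\nabla_{x_1}f_1(x_1,x_2^s(x_1))+\nabla_{x_2}f_1(x_1,x_2^s(x_1))\nabla_{x_1}x_2^s(x_1)$. $\|x\|_P^2=x^TPx$, $\|P\|_2=\lambda_{\max}(P)$, $\lambda_{\min}$ the smallest eigenvalue. $\dot V=\nabla V^T F$ where $F$ is the predictive-sensitivity vector field. *)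

(* Defs.v *)
From HB Require Import structures.
From mathcomp Require Import all_boot all_order all_algebra.
From mathcomp Require Import all_classical all_reals all_analysis.
Set Implicit Arguments. Unset Strict Implicit. Unset Printing Implicit Defensive.
Import Order.TTheory GRing.Theory Num.Theory.
Import numFieldNormedType.Exports.
Local Open Scope classical_set_scope.
Local Open Scope ring_scope.

Section PS.
Variable R : realType.

(* Paper-convention Jacobian (rows = outputs, columns = inputs):
   transpose of the library's 'J f p, for which 'D_v f p = v *m 'J f p. *)
Definition Jac n m (f : 'rV[R]_n -> 'rV[R]_m) (p : 'rV[R]_n) : 'M[R]_(m, n) :=
  (jacobian f p)^T.

Definition Jac1 n1 n2 m (f : 'rV[R]_n1 -> 'rV[R]_n2 -> 'rV[R]_m) x1 x2 :=
  Jac (fun y => f y x2) x1.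
Definition Jac2 n1 n2 m (f : 'rV[R]_n1 -> 'rV[R]_n2 -> 'rV[R]_m) x1 x2 :=
  Jac (fun y => f x1 y) x2.

Definition uncurry2 n1 n2 m (f : 'rV[R]_n1 -> 'rV[R]_n2 -> 'rV[R]_m)
  (z : 'rV[R]_(n1 + n2)) : 'rV[R]_m := f (lsubmx z) (rsubmx z).

Definition C1 n m (g : 'rV[R]_n -> 'rV[R]_m) :=
  (forall p, differentiable g p) /\ continuous (jacobian g).

Definition C1_2 n1 n2 m (f : 'rV[R]_n1 -> 'rV[R]_n2 -> 'rV[R]_m) :=
  C1 (uncurry2 f).

Definition globally_lipschitz n m (g : 'rV[R]_n -> 'rV[R]_m) :=
  exists L : R, forall z z', `|g z - g z'| <= L * `|z - z'|.

Definition locally_lipschitz n m (g : 'rV[R]_n -> 'rV[R]_m) :=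
  forall z, exists2 r : R, 0 < r & exists L : R,
    forall z1 z2, ball z r z1 -> ball z r z2 -> `|g z1 - g z2| <= L * `|z1 - z2|.

Definition sens n1 n2 (f2 : 'rV[R]_n1 -> 'rV[R]_n2 -> 'rV[R]_n2) x1 x2
  : 'M[R]_(n2, n1) :=
  - (invmx (Jac2 f2 x1 x2) *m Jac1 f2 x1 x2).

Definition ps_field n1 n2 (f1 : 'rV[R]_n1 -> 'rV[R]_n2 -> 'rV[R]_n1)
  (f2 : 'rV[R]_n1 -> 'rV[R]_n2 -> 'rV[R]_n2) (z : 'rV[R]_(n1 + n2))
  : 'rV[R]_(n1 + n2) :=
  let x1 := lsubmx z in let x2 := rsubmx z in
  row_mx (f1 x1 x2) (f2 x1 x2 + (sens f2 x1 x2 *m (f1 x1 x2)^T)^T).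

Definition qf n (A : 'M[R]_n) (x : 'rV[R]_n) : R := (x *m A *m x^T) 0 0.

Definition sym_pd n (P : 'M[R]_n) :=
  P^T = P /\ forall x : 'rV[R]_n, x != 0 -> 0 < qf P x.

Definition loewner_le n (A B : 'M[R]_n) := forall x : 'rV[R]_n, qf A x <= qf B x.

Definition wnorm n (P : 'M[R]_n) (x : 'rV[R]_n) : R := Num.sqrt (qf P x).

Definition lambda_min n (A : 'M[R]_n) : R := inf [set a : R | eigenvalue A a].
Definition lambda_max n (A : 'M[R]_n) : R := sup [set a : R | eigenvalue A a].
(* ||P||_2 := lambda_max(P) (P symmetric positive definite) *)
Definition norm2 n (A : 'M[R]_n) : R := lambda_max A.

Definition Vfun n1 n2 (P1 : 'M[R]_n1) (P2 : 'M[R]_n2)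
  (f1 : 'rV[R]_n1 -> 'rV[R]_n2 -> 'rV[R]_n1)
  (f2 : 'rV[R]_n1 -> 'rV[R]_n2 -> 'rV[R]_n2) (x2s : 'rV[R]_n1 -> 'rV[R]_n2)
  (theta : R) (z : 'rV[R]_(n1 + n2)) : R :=
  let x1 := lsubmx z in let x2 := rsubmx z in
  wnorm P1 (f1 x1 (x2s x1)) ^+ 2 + theta * wnorm P2 (f2 x1 x2) ^+ 2.

End PS.

(* Main.v *)
Require Import Defs.
From HB Require Import structures.
From mathcomp Require Import all_boot all_order all_algebra.
From mathcomp Require Import all_classical all_reals all_analysis.
From mathcomp Require Import ring lra.
Import Order.TTheory GRing.Theory Num.Theory.
Import numFieldNormedType.Exports.
Local Open Scope classical_set_scope.
Local Open Scope ring_scope.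

Set Implicit Arguments. Unset Strict Implicit. Unset Printing Implicit Defensive.

Section H.
Variable R : realType.

Lemma mxnorm_entry m n (A : 'M[R]_(m, n)) i j : `|A i j| <= `|A|.
Proof.
rewrite [leRHS]/Num.Def.normr /= mx_normrE.
by apply: le_trans (le_bigmax _ _ (i, j)) => /=.
Qed.

Lemma mxnorm_le m n (A : 'M[R]_(m, n)) c : 0 <= c ->
  (forall i j, `|A i j| <= c) -> `|A| <= c.
Proof.
move=> c0 H; rewrite [leLHS]/Num.Def.normr /= mx_normrE.
by apply: bigmax_le => // -[i j] _; apply: H.
Qed.

Lemma norm_row_mx n1 n2 (a : 'rV[R]_n1) (b : 'rV[R]_n2) :
  `|row_mx a b| <= `|a| + `|b|.
Proof.
apply: mxnorm_le; first by rewrite addr_ge0.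
move=> i j; rewrite -[j]fintype.splitK; case: (fintype.split j) => k /=.
  by rewrite row_mxEl (le_trans (mxnorm_entry _ _ _)) // lerDl.
by rewrite row_mxEr (le_trans (mxnorm_entry _ _ _)) // lerDr.
Qed.

Lemma norm_mulmx n m (y : 'rV[R]_n) (M : 'M[R]_(n, m)) :
  `|y *m M| <= (n%:R * `|M|) * `|y|.
Proof.
apply: mxnorm_le; first by rewrite !mulr_ge0.
move=> i j; rewrite mxE (le_trans (ler_norm_sum _ _ _)) //.
apply: le_trans (_ : \sum_(k < n) `|M| * `|y| <= _).
  apply: ler_sum => k _; rewrite normrM mulrC.
  by apply: ler_pM => //; apply: mxnorm_entry.
by rewrite sumr_const card_ord -mulrA mulr_natl.
Qed.

End H.

Section H2.
Variable R : realType.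

Definition bf n (A : 'M[R]_n) (x y : 'rV[R]_n) : R := (x *m A *m y^T) 0 0.

Lemma qf_bf n (A : 'M[R]_n) x : qf A x = bf A x x.
Proof. by []. Qed.

Lemma bf_sum n (A : 'M[R]_n) x y : bf A x y = \sum_i (x *m A) 0 i * y 0 i.
Proof. by rewrite /bf mxE; apply: eq_bigr => i _; rewrite [y^T _ _]mxE. Qed.

Lemma bf_tr n (A : 'M[R]_n) x y : bf A x y = bf A^T y x.
Proof.
have h (M : 'M[R]_1) : M 0 0 = M^T 0 0 by rewrite mxE.
by rewrite /bf h !trmx_mul trmxK mulmxA.
Qed.

Lemma bfDl n (A : 'M[R]_n) x1 x2 y : bf A (x1 + x2) y = bf A x1 y + bf A x2 y.
Proof. by rewrite /bf !mulmxDl mxE. Qed.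

Lemma bfDr n (A : 'M[R]_n) x y1 y2 : bf A x (y1 + y2) = bf A x y1 + bf A x y2.
Proof. by rewrite /bf linearD /= mulmxDr mxE. Qed.

Lemma bfZl n (A : 'M[R]_n) a x y : bf A (a *: x) y = a * bf A x y.
Proof. by rewrite /bf -!scalemxAl mxE. Qed.

Lemma bfZr n (A : 'M[R]_n) a x y : bf A x (a *: y) = a * bf A x y.
Proof. by rewrite /bf linearZ /= -scalemxAr mxE. Qed.

Lemma bfNl n (A : 'M[R]_n) x y : bf A (- x) y = - bf A x y.
Proof. by rewrite -scaleN1r bfZl mulN1r. Qed.

Lemma bfNr n (A : 'M[R]_n) x y : bf A x (- y) = - bf A x y.
Proof. by rewrite -scaleN1r bfZr mulN1r. Qed.

Lemma bf0l n (A : 'M[R]_n) y : bf A 0 y = 0.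
Proof. by rewrite /bf !mul0mx mxE. Qed.

Lemma bf0r n (A : 'M[R]_n) x : bf A x 0 = 0.
Proof. by rewrite /bf trmx0 mulmx0 mxE. Qed.

Lemma bf_addA n (A B : 'M[R]_n) x y : bf (A + B) x y = bf A x y + bf B x y.
Proof. by rewrite /bf mulmxDr mulmxDl mxE. Qed.

Lemma bf_sym n (A : 'M[R]_n) x y : A^T = A -> bf A x y = bf A y x.
Proof. by move=> AT; rewrite bf_tr AT. Qed.

Lemma qf_tr n (A : 'M[R]_n) x : qf A^T x = qf A x.
Proof. by rewrite !qf_bf -bf_tr. Qed.

Lemma qf0 n (A : 'M[R]_n) : qf A 0 = 0.
Proof. by rewrite qf_bf bf0l. Qed.

Lemma qfZ n (A : 'M[R]_n) a x : qf A (a *: x) = a ^+ 2 * qf A x.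
Proof. by rewrite !qf_bf bfZl bfZr mulrA expr2. Qed.

Lemma qf_addA n (A B : 'M[R]_n) x : qf (A + B) x = qf A x + qf B x.
Proof. by rewrite !qf_bf bf_addA. Qed.

Lemma qf_oppA n (A : 'M[R]_n) x : qf (- A) x = - qf A x.
Proof. by rewrite /qf mulmxN mulNmx mxE. Qed.

Lemma qf_expand n (A : 'M[R]_n) x w t : A^T = A ->
  qf A (x + t *: w) = qf A x + 2 * t * bf A x w + t ^+ 2 * qf A w.
Proof.
move=> AT; rewrite !qf_bf bfDl !bfDr !bfZl !bfZr (bf_sym x w AT).
rewrite expr2; ring.
Qed.

Definition e2 n (x : 'rV[R]_n) := qf 1%:M x.

Lemma e2_sum n (x : 'rV[R]_n) : e2 x = \sum_i x 0 i ^+ 2.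
Proof.
rewrite /e2 qf_bf bf_sum mulmx1; apply: eq_bigr => i _; by rewrite expr2.
Qed.

Lemma e2_ge0 n (x : 'rV[R]_n) : 0 <= e2 x.
Proof. by rewrite e2_sum sumr_ge0 // => i _; rewrite sqr_ge0. Qed.

Lemma e2_ge n (x : 'rV[R]_n) : `|x| ^+ 2 <= e2 x.
Proof.
have [x0|x0] := eqVneq `|x| 0.
  by rewrite x0 expr0n /= e2_ge0.
have [[i j] /= hx] := mx_norm_neq0 x0.
have -> : `|x| = `|x i j| by exact: hx.
rewrite /= e2_sum (bigD1 j) //= ord1 real_normK ?num_real //.
by rewrite lerDl sumr_ge0 // => k _; rewrite sqr_ge0.
Qed.

Lemma e2_le n (x : 'rV[R]_n) : e2 x <= n%:R * `|x| ^+ 2.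
Proof.
rewrite e2_sum; apply: le_trans (_ : \sum_(i < n) `|x| ^+ 2 <= _).
  apply: ler_sum => i _; rewrite -real_normK ?num_real //.
  by rewrite lerXn2r ?nnegrE // mxnorm_entry.
by rewrite sumr_const card_ord mulr_natl.
Qed.

Lemma e2_eq0 n (x : 'rV[R]_n) : e2 x = 0 -> x = 0.
Proof.
move=> h; apply/eqP; rewrite -normr_eq0.
have h2 : `|x| ^+ 2 <= 0 by rewrite -h e2_ge.
have h3 := normr_ge0 x.
apply/eqP; move: h2 h3; rewrite expr2; nra.
Qed.

End H2.

Section H3.
Variable R : realType.

Lemma derive_aff (V W : normedModType R) (f L : V -> W) x v :
  (forall a u w, f (a *: u + w) = a *: L u + f w) -> is_derive x v f (L v).
Proof.
move=> hf.
have e : \forall h \near (0 : R)^', h^-1 *: ((f \o shift x) (h *: v) - f x) = L v.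
  near=> h; rewrite /= hf addrK scalerA mulVf ?scale1r //.
  by near: h; exact: nbhs_dnbhs_neq.
split; first by apply: (is_cvg_near_cst (L v)).
by apply/lim_near_cst.
Unshelve. all: by end_near. Qed.

Lemma derive_lin (V W : normedModType R) (f : V -> W) x v :
  (forall a u w, f (a *: u + w) = a *: f u + f w) -> is_derive x v f (f v).
Proof. exact: derive_aff. Qed.

Lemma mulmxr_cont n m (M : 'M[R]_(n, m)) : continuous (fun y : 'rV[R]_n => y *m M).
Proof.
rewrite (_ : (fun y => y *m M) = mulmxr M); last by [].
apply: bounded_linear_continuous; apply/linear_boundedP.
near=> r.
have hr : n%:R * `|M| <= r by near: r; apply: nbhs_pinfty_ge; exact: num_real.
move=> y; apply: le_trans (norm_mulmx y M) _.
by rewrite ler_wpM2r.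
Unshelve. all: by end_near. Qed.

Lemma diff_mulmxr n m (M : 'M[R]_(n, m)) x :
  differentiable (fun y : 'rV[R]_n => y *m M) x /\
  'd (fun y : 'rV[R]_n => y *m M) x = (fun y => y *m M) :> ('rV[R]_n -> 'rV[R]_m).
Proof.
rewrite (_ : (fun y => y *m M) = mulmxr M); last by [].
have hc : continuous (mulmxr M : 'rV[R]_n -> 'rV[R]_m) by exact: mulmxr_cont.
split; first exact: (@linear_differentiable R _ _ (mulmxr M) x hc).
by rewrite (@diff_lin R _ _ (mulmxr M)).
Qed.

Lemma diff_aff n m (M : 'M[R]_(n, m)) c x :
  differentiable (fun y : 'rV[R]_n => y *m M + c) x /\
  'd (fun y : 'rV[R]_n => y *m M + c) x = (fun y => y *m M) :> ('rV[R]_n -> 'rV[R]_m).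
Proof.
have [d1 e1] := diff_mulmxr M x.
have d2 : differentiable (cst c : 'rV[R]_n -> 'rV[R]_m) x by [].
have d3 : differentiable (fun y => y *m M + c) x by exact: differentiableD d1 d2.
split; first exact: d3.
apply/funext => v; rewrite -(deriveE v d3).
have D : is_derive x v (fun y => y *m M + c) (v *m M).
  by apply: (derive_aff (L := fun u => u *m M)) => a u w; rewrite mulmxDl -scalemxAl addrA.
by case: D => _ ->.
Qed.

Lemma qf_fun n (A : 'M[R]_n) :
  qf A = \sum_(i < n) ((fun x : 'rV[R]_n => (x *m A) 0 i) * (fun x => x 0 i)).
Proof.
apply/funext => x; rewrite fct_sumE /= qf_bf bf_sum.
by [].
Qed.

Lemma coordA_lin n (A : 'M[R]_n) i (a : R) (u w : 'rV[R]_n) :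
  ((a *: u + w) *m A) 0 i = a *: (u *m A) 0 i + (w *m A) 0 i.
Proof. by rewrite mulmxDl -scalemxAl !mxE. Qed.

Lemma coord_lin n i (a : R) (u w : 'rV[R]_n) :
  (a *: u + w) 0 i = a *: u 0 i + w 0 i.
Proof. by rewrite !mxE. Qed.

Lemma differentiable_qf n (A : 'M[R]_n) x : differentiable (qf A) x.
Proof.
rewrite qf_fun; apply: differentiable_sum => i.
apply: differentiableM; last exact: differentiable_coord.
have [d1 _] := diff_mulmxr A x.
exact: (differentiable_comp d1 (differentiable_coord _ _ _)).
Qed.

Lemma diff_qf n (A : 'M[R]_n) x v : 'd (qf A) x v = bf A x v + bf A v x.
Proof.
have D1 i : is_derive x v (fun y : 'rV[R]_n => (y *m A) 0 i) ((v *m A) 0 i).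
  by apply: derive_lin => a u w; apply: coordA_lin.
have D2 i : is_derive x v (fun y : 'rV[R]_n => y 0 i) (v 0 i).
  by apply: derive_lin => a u w; apply: coord_lin.
have d1 i : derivable (fun y : 'rV[R]_n => (y *m A) 0 i) x v by case: (D1 i).
have d2 i : derivable (fun y : 'rV[R]_n => y 0 i) x v by case: (D2 i).
have e1 i : 'D_v (fun y : 'rV[R]_n => (y *m A) 0 i) x = (v *m A) 0 i by case: (D1 i).
have e2 i : 'D_v (fun y : 'rV[R]_n => y 0 i) x = v 0 i by case: (D2 i).
rewrite -(deriveE v (differentiable_qf A x)).
rewrite qf_fun derive_sum; last first.
  by move=> i; apply: derivableM; [exact: d1|exact: d2].
rewrite !bf_sum -big_split /=; apply: eq_bigr => i _.
rewrite (deriveM (d1 i) (d2 i)) e1 e2 /=.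
by rewrite /GRing.scale /= [in X in _ + X]mulrC.
Qed.

End H3.

Section H4.
Variable R : realType.

Lemma diff_lip (V W : normedModType R) (f : V -> W) x v (L : R) :
  differentiable f x -> (forall a b, `|f a - f b| <= L * `|a - b|) ->
  `|'d f x v| <= L * `|v|.
Proof.
move=> df hL.
have dv : derivable f x v by apply: diff_derivable.
rewrite -(deriveE v df) /derive -lim_norm //.
apply: limr_le; first exact: (is_cvg_norm dv).
near=> h.
have h0 : h != 0 by near: h; exact: nbhs_dnbhs_neq.
rewrite /= normrZ normfV.
apply: le_trans (_ : `|h|^-1 * (L * `|h *: v + x - x|) <= _).
  by rewrite ler_wpM2l ?invr_ge0 ?normr_ge0 // hL.
by rewrite addrK normrZ mulrCA mulKf ?normr_eq0.
Unshelve. all: by end_near. Qed.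

Lemma dJac n m (f : 'rV[R]_n -> 'rV[R]_m) p v : 'd f p v = v *m (Jac f p)^T.
Proof. by rewrite /Jac trmxK /jacobian mul_rV_lin1. Qed.

Lemma diff_qf_comp (V : normedModType R) n (A : 'M[R]_n) (g : V -> 'rV[R]_n) z v :
  differentiable g z ->
  differentiable (qf A \o g) z /\
  'd (qf A \o g) z v = bf A (g z) ('d g z v) + bf A ('d g z v) (g z).
Proof.
move=> dg.
have dq := differentiable_qf A (g z).
split; first exact: differentiable_comp dg dq.
by rewrite (diff_comp dg dq) /= diff_qf.
Qed.

Lemma diff_split n1 n2 (W : normedModType R) (G : 'rV[R]_(n1 + n2) -> W)
  (x1 : 'rV[R]_n1) (x2 : 'rV[R]_n2) a b :
  (forall z, differentiable G z) ->
  differentiable (fun y => G (row_mx y x2)) x1 /\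
  differentiable (fun y => G (row_mx x1 y)) x2 /\
  'd G (row_mx x1 x2) (row_mx a b) =
    'd (fun y => G (row_mx y x2)) x1 a + 'd (fun y => G (row_mx x1 y)) x2 b.
Proof.
move=> dG.
pose M1 : 'M[R]_(n1, n1 + n2) := row_mx 1%:M 0.
pose M2 : 'M[R]_(n2, n1 + n2) := row_mx 0 1%:M.
have E1 : (fun y => G (row_mx y x2)) = G \o (fun y => y *m M1 + row_mx 0 x2).
  apply/funext => y /=; rewrite /M1 mul_mx_row mulmx1 mulmx0 add_row_mx.
  by rewrite addr0 add0r.
have E2 : (fun y => G (row_mx x1 y)) = G \o (fun y => y *m M2 + row_mx x1 0).
  apply/funext => y /=; rewrite /M2 mul_mx_row mulmx1 mulmx0 add_row_mx.
  by rewrite addr0 add0r.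
have [da1 ea1] := diff_aff M1 (row_mx 0 x2) x1.
have [da2 ea2] := diff_aff M2 (row_mx x1 0) x2.
have dc1 := differentiable_comp da1 (dG _).
have dc2 := differentiable_comp da2 (dG _).
rewrite E1 E2; split; first exact: dc1.
split; first exact: dc2.
rewrite (diff_comp da1 (dG _)) (diff_comp da2 (dG _)) /= ea1 ea2.
rewrite /M1 /M2 !mul_mx_row !mulmx1 !mulmx0 !add_row_mx !addr0 !add0r.
by rewrite -linearD /= add_row_mx addr0 add0r.
Qed.

End H4.

Section H5.
Variable R : realType.

Lemma quad_zero (b c : R) : 0 <= c -> (forall t, 0 <= 2 * t * b + t ^+ 2 * c) -> b = 0.
Proof.
move=> c0 H.
have k0 : 0 < c + 1 by lra.
have := H (- b / (c + 1)).
set t := - b / (c + 1).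
have ht : t * (c + 1) = - b by rewrite /t divfK // gt_eqF.
move=> h.
have h2 : 0 <= (2 * t * b + t ^+ 2 * c) * (c + 1) ^+ 2 by rewrite mulr_ge0 // sqr_ge0.
have e : (2 * t * b + t ^+ 2 * c) * (c + 1) ^+ 2 = - (b ^+ 2 * (c + 2)).
  have -> : (2 * t * b + t ^+ 2 * c) * (c + 1) ^+ 2 =
    2 * (t * (c + 1)) * b * (c + 1) + (t * (c + 1)) ^+ 2 * c by ring.
  rewrite ht; ring.
rewrite e oppr_ge0 in h2.
have c2 : 0 < c + 2 by rewrite ltr_wpDl.
have : b ^+ 2 * (c + 2) == 0.
  by rewrite eq_le h2 mulr_ge0 // ?sqr_ge0 // ltW.
by rewrite mulf_eq0 (gt_eqF c2) orbF sqrf_eq0 => /eqP.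
Qed.

Lemma inf_min (E : set R) m : E m -> (forall a, E a -> m <= a) -> inf E = m.
Proof.
move=> Em lb; apply/eqP; rewrite eq_le; apply/andP; split.
  by apply: ge_inf => //; exists m.
by apply: lb_le_inf => //; exists m.
Qed.

Lemma sup_max (E : set R) m : E m -> (forall a, E a -> a <= m) -> sup E = m.
Proof.
move=> Em ub; apply/eqP; rewrite eq_le; apply/andP; split.
  by apply: ge_sup => //; exists m.
by apply: sup_upper_bound => //; split; [exists m | exists m].
Qed.

Lemma e2_cont n : continuous (@e2 R n).
Proof. by move=> x; apply: differentiable_continuous; exact: differentiable_qf. Qed.

Lemma rayleigh_min n (A : 'M[R]_n.+1) : A^T = A ->
  exists2 mu, eigenvalue A mu & forall x, mu * e2 x <= qf A x.
Proof.
move=> AT.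
pose S := [set x : 'rV[R]_n.+1 | e2 x = 1].
have S0 : S !=set0.
  exists (delta_mx 0 ord0); rewrite /S /= e2_sum (bigD1 ord0) //= big1.
    by rewrite !mxE /= expr1n addr0.
  by move=> i ni; rewrite mxE (negbTE ni) andbF expr0n.
have cS : compact S.
  have hb : [bounded x | x in S].
    rewrite /bounded_near; near=> M.
    have hM : 1 <= M by near: M; apply: nbhs_pinfty_ge; exact: num_real.
    move=> x /= Sx.
    have h1 : `|x| ^+ 2 <= 1 by rewrite -Sx e2_ge.
    have h2 := normr_ge0 x.
    suff : `|x| <= 1 by lra.
    by move: h1 h2; rewrite expr2; nra.
  apply: (bounded_closed_compact hb).
  have : closed (@e2 R n.+1 @^-1` [set x : R | x = 1]).
    by apply: preimage_closed => [x _|]; [exact: e2_cont|exact: closed_eq].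
  by [].
have cq : {within S, continuous (qf A)}.
  apply: continuous_subspaceT => x; apply: differentiable_continuous.
  exact: differentiable_qf.
have [v Sv vmin] := EVT_min_rV S0 cS cq.
rewrite inE in Sv.
pose mu := qf A v.
have hmin : forall x, mu * e2 x <= qf A x.
  move=> x; have [->|x0] := eqVneq x 0.
    by rewrite /e2 !qf0 mulr0.
  have ex : 0 < e2 x.
    rewrite lt_def e2_ge0 andbT; apply/eqP => h; move/eqP: x0; apply.
    exact: e2_eq0.
  pose s := Num.sqrt (e2 x).
  have s0 : 0 < s by rewrite sqrtr_gt0.
  have ss : s ^+ 2 = e2 x by rewrite sqr_sqrtr // ltW.
  have Sy : (s^-1 *: x) \in S.
    rewrite inE /S /= /e2 qfZ -/(e2 x) -ss exprVn mulVf //.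
    by rewrite expf_neq0 // gt_eqF.
  have := vmin _ Sy; rewrite qfZ exprVn ss => h.
  by rewrite -ler_pdivlMr // mulrC.
exists mu => //.
apply/eigenvalueP; exists v; last first.
  by apply/eqP => v0; move: Sv; rewrite v0 /S /= /e2 qf0 => /eqP; rewrite eq_sym oner_eq0.
pose r := v *m A - mu *: v.
have Hb w : bf A v w - mu * bf 1%:M v w = bf 1%:M r w.
  by rewrite /r bfDl bfNl bfZl {3}/bf mulmx1.
have key w : bf A v w - mu * bf 1%:M v w = 0.
  apply: (@quad_zero _ (qf A w - mu * e2 w)); first by rewrite subr_ge0 hmin.
  move=> t.
  have := hmin (v + t *: w).
  rewrite /e2 (qf_expand _ _ _ AT) (qf_expand _ _ _ (@trmx1 R n.+1)) -/(e2 v) -/(e2 w) Sv -/mu.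
  move=> h; set u := bf 1%:M v w in h *; set k := bf A v w in h *.
  have -> : 2 * t * (k - mu * u) + t ^+ 2 * (qf A w - mu * e2 w) =
    (mu + 2 * t * k + t ^+ 2 * qf A w) - mu * (1 + 2 * t * u + t ^+ 2 * e2 w) by ring.
  by rewrite subr_ge0.
have := key r; rewrite Hb -/(e2 r) => /e2_eq0 /eqP.
by rewrite subr_eq0 => /eqP.
Unshelve. all: by end_near. Qed.

End H5.

Section H6.
Variable R : realType.

Lemma eig_qf n (A : 'M[R]_n) a w : w *m A = a *: w -> qf A w = a * e2 w.
Proof. by move=> h; rewrite /e2 /qf mulmx1 h -scalemxAl mxE. Qed.

Lemma e2_gt0 n (x : 'rV[R]_n) : x != 0 -> 0 < e2 x.
Proof.
move=> x0; rewrite lt_def e2_ge0 andbT; apply/eqP => h; move/eqP: x0; apply.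
exact: e2_eq0.
Qed.

Lemma rv0 (x : 'rV[R]_0) : x = 0.
Proof. by rewrite thinmx0. Qed.

Lemma qf_ge0 n (P : 'M[R]_n) x : sym_pd P -> 0 <= qf P x.
Proof.
move=> [_ pd]; have [->|x0] := eqVneq x 0; first by rewrite qf0.
exact/ltW/pd.
Qed.

Lemma lmin_bound n (Q : 'M[R]_n) : Q^T = Q -> forall x, lambda_min Q * e2 x <= qf Q x.
Proof.
case: n Q => [|n] Q QT x.
  by rewrite (rv0 x) /e2 !qf0 mulr0.
have [mu eig hmin] := rayleigh_min QT.
suff -> : lambda_min Q = mu by [].
apply: inf_min => // a /eigenvalueP [w hw w0].
have := hmin w; rewrite (eig_qf hw) => h.
by rewrite -(ler_pM2r (e2_gt0 w0)).
Qed.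

Lemma lmin_pos n (Q : 'M[R]_n) : sym_pd Q -> (0 < n)%N -> 0 < lambda_min Q.
Proof.
case: n Q => [|n] Q [QT pd] // _.
have [mu eig hmin] := rayleigh_min QT.
have -> : lambda_min Q = mu.
  apply: inf_min => // a /eigenvalueP [w hw w0].
  have := hmin w; rewrite (eig_qf hw) => h.
  by rewrite -(ler_pM2r (e2_gt0 w0)).
move/eigenvalueP: eig => [w hw w0].
have := pd w w0; rewrite (eig_qf hw).
by rewrite pmulr_lgt0 // e2_gt0.
Qed.

Lemma lmax_bound n (P : 'M[R]_n) : P^T = P -> forall x, qf P x <= norm2 P * e2 x.
Proof.
case: n P => [|n] P PT x.
  by rewrite (rv0 x) /e2 !qf0 mulr0.
have NT : (- P)^T = - P by rewrite linearN /= PT.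
have [mu eig hmin] := rayleigh_min NT.
suff -> : norm2 P = - mu.
  by have := hmin x; rewrite qf_oppA mulNr; lra.
apply: sup_max.
  move/eigenvalueP: eig => [w hw w0]; apply/eigenvalueP; exists w => //.
  by rewrite scaleNr -hw mulmxN opprK.
move=> a /eigenvalueP [w hw w0].
have := hmin w; rewrite qf_oppA (eig_qf hw) => h.
rewrite -(ler_pM2r (e2_gt0 w0)); lra.
Qed.

Lemma lmax_pos n (P : 'M[R]_n) : sym_pd P -> (0 < n)%N -> 0 < norm2 P.
Proof.
case: n P => [|n] P [PT pd] // _.
pose w : 'rV[R]_n.+1 := delta_mx 0 ord0.
have w0 : w != 0.
  apply/eqP => /matrixP /(_ 0 ord0); rewrite !mxE /= => /eqP.
  by rewrite oner_eq0.
have := lmax_bound PT w; have := pd w w0; have := e2_gt0 w0.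
move=> a b c; have := lt_le_trans b c.
by rewrite pmulr_lgt0.
Qed.

Lemma ratio_bound n (P Q : 'M[R]_n) : sym_pd P -> sym_pd Q ->
  forall x, lambda_min Q / norm2 P * qf P x <= qf Q x.
Proof.
case: n P Q => [|n] P Q hP hQ x.
  by rewrite (rv0 x) !qf0 mulr0.
have l0 := lmin_pos hQ (ltn0Sn n).
have m0 := lmax_pos hP (ltn0Sn n).
apply: le_trans (lmin_bound hQ.1 x).
rewrite -mulrA; apply: ler_wpM2l; first exact: ltW.
by rewrite ler_pdivrMl // lmax_bound // hP.1.
Qed.

Lemma qf_ub n (P : 'M[R]_n) : P^T = P ->
  exists2 M, 0 <= M & forall x, qf P x <= M * `|x| ^+ 2.
Proof.
move=> PT; exists (`|norm2 P| * n%:R); first by rewrite mulr_ge0.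
move=> x; apply: le_trans (lmax_bound PT x) _.
apply: le_trans (_ : `|norm2 P| * e2 x <= _).
  by rewrite ler_wpM2r ?e2_ge0 // real_ler_norm // num_real.
by rewrite -mulrA ler_wpM2l // e2_le.
Qed.

Lemma qf_lb n (Q : 'M[R]_n) : sym_pd Q ->
  exists2 c, 0 < c & forall x, c * `|x| ^+ 2 <= qf Q x.
Proof.
case: n Q => [|n] Q hQ.
  by exists 1 => // x; rewrite (rv0 x) normr0 expr0n mulr0 qf0.
exists (lambda_min Q); first exact: lmin_pos hQ (ltn0Sn n).
move=> x; apply: le_trans (lmin_bound hQ.1 x).
by rewrite ler_wpM2l ?e2_ge // ltW // (lmin_pos hQ (ltn0Sn n)).
Qed.

Lemma wnorm_ge0 n (P : 'M[R]_n) x : 0 <= wnorm P x.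
Proof. exact: sqrtr_ge0. Qed.

Lemma wnorm_sqr n (P : 'M[R]_n) x : sym_pd P -> wnorm P x ^+ 2 = qf P x.
Proof. by move=> hP; rewrite /wnorm sqr_sqrtr // qf_ge0. Qed.

Lemma wnorm_ub n (P : 'M[R]_n) : sym_pd P ->
  exists2 c, 0 <= c & forall x, wnorm P x <= c * `|x|.
Proof.
move=> hP; have [M M0 hM] := qf_ub hP.1.
exists (Num.sqrt M); first exact: sqrtr_ge0.
move=> x; rewrite /wnorm.
apply: le_trans (ler_wsqrtr (hM x)) _.
by rewrite sqrtrM // sqrtr_sqr normr_id.
Qed.

Lemma cauchy_schwarz n (P : 'M[R]_n) x y : sym_pd P ->
  `|bf P x y| <= wnorm P x * wnorm P y.
Proof.
move=> hP; have [->|y0] := eqVneq y 0.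
  by rewrite bf0r normr0 mulr_ge0 // wnorm_ge0.
have c0 : 0 < qf P y by apply: hP.2.
set a := qf P x; set b := bf P x y; set c := qf P y.
have hb : b ^+ 2 <= a * c.
  pose t := - b / c.
  have ht : t * c = - b by rewrite /t divfK // gt_eqF.
  have h := qf_ge0 (x + t *: y) hP.
  rewrite (qf_expand _ _ _ hP.1) -/a -/b -/c in h.
  have h2 : 0 <= (a + 2 * t * b + t ^+ 2 * c) * c by rewrite mulr_ge0 // ltW.
  have e : (a + 2 * t * b + t ^+ 2 * c) * c = a * c + 2 * (t * c) * b + (t * c) ^+ 2 by ring.
  rewrite e ht in h2; lra.
rewrite /wnorm -/a -/c -sqrtrM ?qf_ge0 // -sqrtr_sqr.
exact: ler_wsqrtr.
Qed.

End H6.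

Section H7.
Variable R : realType.

Lemma unc_row n1 n2 m (f : 'rV[R]_n1 -> 'rV[R]_n2 -> 'rV[R]_m) a b :
  uncurry2 f (row_mx a b) = f a b.
Proof. by rewrite /uncurry2 row_mxKl row_mxKr. Qed.

Lemma bf_diff m (A : 'M[R]_m) u w0 :
  differentiable (fun w => bf A u w) w0 /\
  'd (fun w => bf A u w) w0 = (fun w => bf A u w) :> ('rV[R]_m -> R).
Proof.
have E : (fun w => bf A u w) = (fun w : 'rV[R]_m => (w *m (A^T *m u^T)) 0 0).
  by apply/funext => w; rewrite bf_tr /bf mulmxA.
have [d1 _] := diff_mulmxr (A^T *m u^T) w0.
have dB : differentiable (fun w => bf A u w) w0.
  by rewrite E; exact: (differentiable_comp d1 (differentiable_coord _ _ _)).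
split; first exact: dB.
apply/funext => v; rewrite -(deriveE v dB).
have D : is_derive w0 v (fun w => bf A u w) (bf A u v).
  by apply: derive_lin => a x y; rewrite bfDr bfZr.
by case: D => _ ->.
Qed.

Lemma aff_R n (d y0 : 'rV[R]_n) t :
  differentiable (fun s : R => s *: d + y0) t /\
  'd (fun s : R => s *: d + y0) t 1 = d.
Proof.
have D : is_derive t 1 (fun s : R => s *: d + y0) ((fun u : R => u *: d) 1).
  apply: (derive_aff (L := fun u : R => u *: d)) => a u w.
  by rewrite scalerDl scalerA addrA.
have dd : differentiable (fun s : R => s *: d + y0) t.
  by apply/derivable1_diffP; case: D.
split; first exact: dd.
rewrite -(deriveE (1 : R) dd); case: D => _ ->; exact: scale1r.
Qed.

Lemma qfPJ n (P J : 'M[R]_n) d : P^T = P ->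
  qf (P *m J + J^T *m P) d = 2 * qf (P *m J) d.
Proof.
move=> PT; rewrite qf_addA.
have -> : J^T *m P = (P *m J)^T by rewrite trmx_mul PT.
by rewrite qf_tr mulr2n mulrDl mul1r.
Qed.

Lemma bf_J n (P J : 'M[R]_n) d : bf P d (d *m J^T) = qf (P *m J) d.
Proof. by rewrite /bf /qf trmx_mul trmxK !mulmxA. Qed.

Lemma contraction n1 n2 (f2 : 'rV[R]_n1 -> 'rV[R]_n2 -> 'rV[R]_n2)
  (x2s : 'rV[R]_n1 -> 'rV[R]_n2) (P2 Q2 : 'M[R]_n2) :
  (forall z, differentiable (uncurry2 f2) z) ->
  (forall x1, f2 x1 (x2s x1) = 0) ->
  sym_pd P2 -> sym_pd Q2 ->
  (forall x1 x2, loewner_le (P2 *m Jac2 f2 x1 x2 + (Jac2 f2 x1 x2)^T *m P2) (- Q2)) ->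
  exists2 K, 0 <= K & forall x1 x2, `|x2 - x2s x1| <= K * wnorm P2 (f2 x1 x2).
Proof.
move=> dG f2s hP hQ hL.
have [cq cq0 hcq] := qf_lb hQ.
have [cp cp0 hcp] := wnorm_ub hP.
exists (2 * cp / cq); first by rewrite divr_ge0 // ?mulr_ge0 // ltW.
move=> x1 x2.
set y0 := x2s x1; set d := x2 - y0.
have dg y : differentiable (fun y => f2 x1 y) y.
  have [_ [h _]] := diff_split x1 y 0 0 dG.
  by move: h; rewrite (_ : (fun y => uncurry2 f2 (row_mx x1 y)) = (fun y => f2 x1 y)) //;
    apply/funext => w; rewrite unc_row.
pose phi := (fun w => bf P2 d w) \o (fun y => f2 x1 y) \o (fun s : R => s *: d + y0).
pose dphi := fun s : R => qf (P2 *m Jac2 f2 x1 (s *: d + y0)) d.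
have Dphi s : differentiable phi s /\ 'd phi s 1 = dphi s.
  have [da ea] := aff_R d y0 s.
  have [db eb] := bf_diff P2 d (f2 x1 (s *: d + y0)).
  have dc := differentiable_comp da (dg _).
  split; first exact: differentiable_comp dc db.
  rewrite (diff_comp dc db) /= (diff_comp da (dg _)) /= ea eb.
  by rewrite dJac bf_J.
have phi0 : phi 0 = 0 by rewrite /phi /= scale0r add0r /y0 f2s bf0r.
have phi1 : phi 1 = bf P2 d (f2 x1 x2) by rewrite /phi /= scale1r /d subrK.
have [c _ hc] : exists2 c, c \in `[0, 1]%R & phi 1 - phi 0 = dphi c * (1 - 0).
  apply: MVT_segment => //.
    move=> s _; have [ds es] := Dphi s.
    split; first by apply/derivable1_diffP.
    by rewrite (deriveE _ ds) es.
  apply: continuous_subspaceT => s.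
  exact: differentiable_continuous (Dphi s).1.
rewrite phi0 phi1 subr0 subr0 mulr1 in hc.
have hneg : dphi c <= - (cq / 2) * `|d| ^+ 2.
  have h := hL x1 (c *: d + y0) d.
  rewrite qfPJ ?hP.1 // qf_oppA in h.
  have := hcq d; rewrite /dphi; lra.
have hcs := cauchy_schwarz d (f2 x1 x2) hP.
have hd := hcp d.
set a := wnorm P2 (f2 x1 x2) in hcs *.
have a0 : 0 <= a by exact: wnorm_ge0.
have hw0 := wnorm_ge0 P2 d.
have nd0 := normr_ge0 d.
have h1 : (cq / 2) * `|d| ^+ 2 <= cp * `|d| * a.
  apply: le_trans (_ : `|bf P2 d (f2 x1 x2)| <= _); last first.
    apply: le_trans hcs _; by rewrite ler_wpM2r.
  rewrite hc; apply: le_trans (_ : - dphi c <= _); first lra.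
  by rewrite -normrN ler_norm.
rewrite -/d.
have [d0|dpos] := eqVneq `|d| 0.
  by rewrite d0 mulr_ge0 // divr_ge0 ?mulr_ge0 // ltW.
have dp : 0 < `|d| by rewrite lt_def dpos nd0.
rewrite mulrAC ler_pdivlMr //.
have : `|d| * (cq * `|d|) <= `|d| * (2 * cp * a).
  rewrite mulrCA; move: h1; rewrite expr2; lra.
rewrite ler_pM2l // => h2.
by rewrite mulrC.
Qed.

End H7.

Section H8.
Variable R : realType.

Lemma ps_cancel n1 n2 (J1 : 'M[R]_(n2, n1)) (J2 : 'M[R]_n2) (u1 : 'rV[R]_n1) f :
  J2 \in unitmx ->
  u1 *m J1^T + (f + ((- (invmx J2 *m J1)) *m u1^T)^T) *m J2^T = f *m J2^T.
Proof.
move=> J2u.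
rewrite mulmxDl trmx_mul trmxK -mulmxA -trmx_mul mulmxN mulmxA mulmxV //.
by rewrite mul1mx linearN /= mulmxN addrC -addrA addNr addr0.
Qed.

Lemma row_diff n1 n2 (a c : 'rV[R]_n1) (b d : 'rV[R]_n2) :
  row_mx a b - row_mx c d = row_mx (a - c) (b - d).
Proof. by rewrite opp_row_mx add_row_mx. Qed.

Lemma lip_abs n m (g : 'rV[R]_n -> 'rV[R]_m) : globally_lipschitz g ->
  exists2 L, 0 <= L & forall z z', `|g z - g z'| <= L * `|z - z'|.
Proof.
move=> [L hL]; exists `|L|; first exact: normr_ge0.
move=> z z'; apply: le_trans (hL z z') _.
by rewrite ler_wpM2r // real_ler_norm // num_real.
Qed.

End H8.

Unset Implicit Arguments. Set Strict Implicit.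

Theorem lemma2 (R : realType) (n1 n2 : nat)
  (f1 : 'rV[R]_n1 -> 'rV[R]_n2 -> 'rV[R]_n1)
  (f2 : 'rV[R]_n1 -> 'rV[R]_n2 -> 'rV[R]_n2)
  (x2s : 'rV[R]_n1 -> 'rV[R]_n2)
  (P1 Q1 : 'M[R]_n1) (P2 Q2 : 'M[R]_n2) :
  C1_2 f1 -> C1_2 f2 ->
  (forall x1 x2, Jac2 f2 x1 x2 \in unitmx) ->
  locally_lipschitz (ps_field f1 f2) ->
  C1 x2s -> (forall x1, f2 x1 (x2s x1) = 0) ->
  globally_lipschitz (uncurry2 f1) -> globally_lipschitz (uncurry2 f2) ->
  sym_pd P1 -> sym_pd Q1 -> sym_pd P2 -> sym_pd Q2 ->
  (forall x1, loewner_le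
     (P1 *m Jac (fun y => f1 y (x2s y)) x1 + (Jac (fun y => f1 y (x2s y)) x1)^T *m P1)
     (- Q1)) ->
  (forall x1 x2, loewner_le (P2 *m Jac2 f2 x1 x2 + (Jac2 f2 x1 x2)^T *m P2) (- Q2)) ->
  exists2 nu : R, 0 < nu &
    forall theta : R, 0 < theta ->
    forall (x1 : 'rV[R]_n1) (x2 : 'rV[R]_n2),
      let z := row_mx x1 x2 in
      let a := wnorm P2 (f2 x1 x2) in
      let b := wnorm P1 (f1 x1 (x2s x1)) in
      'd (Vfun P1 P2 f1 f2 x2s theta) z (ps_field f1 f2 z) <=
      - (a * (theta * lambda_min Q2 / norm2 P2 * a - nu * b)
         + b * (- nu * a + lambda_min Q1 / norm2 P1 * b)).
Proof.
move=> [dG1 _] [dG2 _] hinv _ [dxs _] f2s lip1 lip2 hP1 hQ1 hP2 hQ2 hr hJ2.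
have [L1 L10 hL1] := lip_abs lip1.
have [L2 L20 hL2] := lip_abs lip2.
have [K K0 hK] := contraction dG2 f2s hP2 hQ2 hJ2.
have [cp1 cp10 hcp1] := wnorm_ub hP1.
have [cp2 cp20 hcp2] := wnorm_ub hP2.
pose F := fun y => f1 y (x2s y).
pose M1 : 'M[R]_(n1, n1 + n2) := row_mx 1%:M 0.
pose M2 : 'M[R]_(n2, n1 + n2) := row_mx 0 1%:M.
have EF : F = uncurry2 f1 \o (fun y => y *m M1 + x2s y *m M2).
  apply/funext => y /=; rewrite /M1 /M2 !mul_mx_row !mulmx1 !mulmx0 add_row_mx.
  by rewrite addr0 add0r unc_row.
have dF y : differentiable F y.
  have d1 := (diff_mulmxr M1 y).1.
  have d2 := differentiable_comp (dxs y) (diff_mulmxr M2 (x2s y)).1.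
  have d3 := differentiableD d1 d2.
  rewrite EF; exact: differentiable_comp d3 (dG1 _).
have hxs y y' : `|x2s y - x2s y'| <= K * cp2 * L2 * `|y - y'|.
  apply: le_trans (hK y' (x2s y)) _.
  rewrite -!mulrA ler_wpM2l //.
  have -> : f2 y' (x2s y) = f2 y' (x2s y) - f2 y (x2s y) by rewrite f2s subr0.
  apply: le_trans (hcp2 _) _; rewrite ler_wpM2l //.
  rewrite -(unc_row f2 y' (x2s y)) -(unc_row f2 y (x2s y)).
  apply: le_trans (hL2 _ _) _.
  rewrite ler_wpM2l // row_diff subrr.
  apply: le_trans (norm_row_mx _ _) _.
  by rewrite normr0 addr0 distrC.
pose LF := L1 * (1 + K * cp2 * L2).
have LF0 : 0 <= LF by rewrite mulr_ge0 // addr_ge0 // !mulr_ge0.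
have hF y y' : `|F y - F y'| <= LF * `|y - y'|.
  rewrite /F -(unc_row f1 y (x2s y)) -(unc_row f1 y' (x2s y')).
  apply: le_trans (hL1 _ _) _.
  rewrite /LF -mulrA ler_wpM2l // row_diff.
  apply: le_trans (norm_row_mx _ _) _.
  rewrite mulrDl mul1r lerD2l; exact: hxs.
pose nu0 := cp1 * LF * L1 * K.
have nu00 : 0 <= nu0.
  rewrite /nu0; apply: mulr_ge0 => //; apply: mulr_ge0 => //; exact: mulr_ge0.
exists (nu0 + 1); first by rewrite ltr_wpDl.
move=> theta th0 x1 x2; cbv zeta.
set z := row_mx x1 x2.
set a := wnorm P2 (f2 x1 x2); set b := wnorm P1 (f1 x1 (x2s x1)).
set v := ps_field f1 f2 z.
pose G2 := uncurry2 f2.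
pose A1 := qf P1 \o (F \o (@lsubmx R 1 n1 n2)).
pose A2 := qf P2 \o G2.
have EV : Vfun P1 P2 f1 f2 x2s theta = A1 + theta *: A2.
  apply/funext => w; rewrite /Vfun /= (wnorm_sqr _ hP1) (wnorm_sqr _ hP2).
  by [].
have dl : differentiable (F \o lsubmx) z.
  exact: differentiable_comp (differentiable_lsubmx z) (dF _).
have [dA1 eA1] := diff_qf_comp P1 v dl.
have [dA2 eA2] := diff_qf_comp P2 v (dG2 z).
have dV : differentiable (A1 + theta *: A2) z.
  exact: differentiableD dA1 (differentiableZ theta dA2).
rewrite EV -(deriveE v dV) (deriveD (diff_derivable dA1) (diff_derivable (differentiableZ theta dA2))).
rewrite (deriveZ _ (diff_derivable dA2)) (deriveE v dA1) (deriveE v dA2) eA1 eA2.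
set u1 := f1 x1 x2.
set u2 := f2 x1 x2 + (sens f2 x1 x2 *m u1^T)^T.
have ev : v = row_mx u1 u2 by rewrite /v /ps_field /z row_mxKl row_mxKr.
have dlv : 'd (@lsubmx R 1 n1 n2) z v = lsubmx v.
  rewrite -(deriveE v (differentiable_lsubmx z)).
  have D : is_derive z v (@lsubmx R 1 n1 n2) (lsubmx v).
    by apply: derive_lin => c p q; rewrite linearD linearZ.
  by case: D => _ ->.
have hD1 : 'd (F \o lsubmx) z v = 'd F x1 u1.
  rewrite (diff_comp (differentiable_lsubmx z) (dF _)) /= dlv.
  by rewrite ev /z !row_mxKl.
have hFz : (F \o lsubmx) z = F x1 by rewrite /= /z row_mxKl.
have hGz : uncurry2 f2 z = f2 x1 x2 by rewrite /z unc_row.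
have hD2 : 'd (uncurry2 f2) z v = f2 x1 x2 *m (Jac2 f2 x1 x2)^T.
  have [_ [_ hs]] := diff_split x1 x2 u1 u2 dG2.
  rewrite ev /z hs.
  rewrite (_ : (fun y => uncurry2 f2 (row_mx y x2)) = (fun y => f2 y x2)); last first.
    by apply/funext => y; rewrite unc_row.
  rewrite (_ : (fun y => uncurry2 f2 (row_mx x1 y)) = (fun y => f2 x1 y)); last first.
    by apply/funext => y; rewrite unc_row.
  rewrite !dJac /u2 /sens.
  exact: (ps_cancel _ _ _ (hinv x1 x2)).
rewrite hD1 hFz hGz hD2.
rewrite [bf P1 ('d F x1 u1) _](bf_sym _ _ hP1.1).
rewrite [bf P2 (f2 x1 x2 *m _) _](bf_sym _ _ hP2.1).
set J2 := Jac2 f2 x1 x2.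
set r1 := lambda_min Q1 / norm2 P1.
set r2 := lambda_min Q2 / norm2 P2.
have ha : a ^+ 2 = qf P2 (f2 x1 x2) by rewrite /a wnorm_sqr.
have hb : b ^+ 2 = qf P1 (F x1) by rewrite /b wnorm_sqr.
have a0 : 0 <= a by exact: wnorm_ge0.
have b0 : 0 <= b by exact: wnorm_ge0.
have T2b : bf P2 (f2 x1 x2) (f2 x1 x2 *m J2^T) <= - (r2 / 2) * a ^+ 2.
  rewrite bf_J ha.
  have h := hJ2 x1 x2 (f2 x1 x2).
  rewrite qfPJ ?hP2.1 // qf_oppA -/J2 in h.
  have h2 := ratio_bound hP2 hQ2 (f2 x1 x2).
  rewrite -/r2 in h2; lra.
set w := u1 - F x1.
have hu : u1 = w + F x1 by rewrite /w subrK.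
rewrite hu linearD /=.
have T1b : bf P1 (F x1) ('d F x1 (F x1)) <= - (r1 / 2) * b ^+ 2.
  rewrite dJac bf_J hb.
  have h := hr x1 (F x1).
  rewrite qfPJ ?hP1.1 // qf_oppA in h.
  have h2 := ratio_bound hP1 hQ1 (F x1).
  rewrite -/r1 in h2; lra.
have hw : `|w| <= L1 * (K * a).
  rewrite /w /u1 /F -(unc_row f1 x1 x2) -(unc_row f1 x1 (x2s x1)).
  apply: le_trans (hL1 _ _) _; rewrite ler_wpM2l // row_diff subrr.
  apply: le_trans (norm_row_mx _ _) _; rewrite normr0 add0r.
  exact: hK.
have T3b : bf P1 (F x1) ('d F x1 w) <= nu0 * a * b.
  apply: le_trans (ler_norm _) _.
  apply: le_trans (cauchy_schwarz _ _ hP1) _.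
  rewrite (_ : wnorm P1 (F x1) = b) // [nu0 * a * b]mulrC; apply: ler_wpM2l => //.
  have hdw : `|'d F x1 w| <= LF * (L1 * (K * a)).
    by apply: le_trans (diff_lip _ (dF x1) hF) _; apply: ler_wpM2l.
  have -> : nu0 * a = cp1 * (LF * (L1 * (K * a))) by rewrite /nu0 !mulrA.
  apply: le_trans (hcp1 _) _; exact: ler_wpM2l.
rewrite bfDr.
rewrite (_ : theta * lambda_min Q2 / norm2 P2 = theta * r2); last by rewrite /r2 mulrA.
set X1 := bf P1 (F x1) ('d F x1 w) in T3b *.
set X2 := bf P1 (F x1) ('d F x1 (F x1)) in T1b *.
set Y := bf P2 (f2 x1 x2) (f2 x1 x2 *m J2^T) in T2b *.
have hth : theta * Y <= theta * (- (r2 / 2) * a ^+ 2) by apply: ler_wpM2l => //; exact: ltW.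
have ab0 : 0 <= a * b by exact: mulr_ge0.
rewrite (_ : theta *: (Y + Y) = theta * Y + theta * Y); last by rewrite /GRing.scale /= mulrDr.
move: hth T3b T1b ab0; rewrite !expr2.
move: (theta * Y) => tY.
move=> h1 h2 h3 h4; nra.
Qed.
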